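(* Let $m\ge1$ and $1\le t\le 2^{m-1}$ be integers and $p=t/2^m$. Let $f:\{0,1\}^n\to\{0,1\}$ and let $g=\mathrm{Red}(f):\{0,1\}^{mn}\to\{0,1\}$ be defined below. Then \[ \sum_{i=1}^{mn}I_i(g)^2\le 12p^2\lfloor\log(1/p)\rfloor\sum_{i=1}^nI_i(f)^2, \] where the influences on $f$ are w.r.t. $\mu_p$ and those on $g$ are w.r.t. the uniform measure $\mu_{1/2}$.
   Context: For $0<p<1$, $\mu_p$ is the product measure on $\{0,1\}^n$ with $\mu_p(x)=p^{\sum_i x_i}(1-p)^{n-\sum_i x_i}$. For a function $f$ on $\{0,1\}^n$ and $1\le i\le n$, the influence of coordinate $i$ w.r.t. $\mu_p$ is $I_i(f)=\Pr_{x\sim\mu_p}[f(x)\ne f(x\oplus e_i)]$, where $x\oplus e_i$ is $x$ with its $i$-th coordinate flipped. Reduction: write $y\in\{0,1\}^{mn}$ as $(y^1,\dots,y^n)$, $y^i=(y^i_1,\dots,y^i_m)\in\{0,1\}^m$, where $y^i_j$ is coordinate $(i-1)m+j$ of $y$. Let $\mathrm{Bin}(y^i)=\sum_{j=0}^{m-1}2^jy^i_{m-j}$, $h(y^i)=1$ if $\mathrm{Bin}(y^i)\ge 2^m-t$ and $0$ otherwise, and $g(y)=f(h(y^1),\dots,h(y^n))$. $\log$ is base 2. *)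

(* Defs.v *)
From HB Require Import structures.
From mathcomp Require Import all_boot all_order all_algebra.
From mathcomp Require Import reals exp.
Set Implicit Arguments. Unset Strict Implicit. Unset Printing Implicit Defensive.
Import Order.TTheory GRing.Theory Num.Theory.
Local Open Scope ring_scope.

(* The hypercube {0,1}^n, coordinates indexed 0..n-1 (paper: 1..n). *)
Definition cube (n : nat) := {ffun 'I_n -> bool}.

Definition mu {R : pzRingType} (p : R) {n : nat} (x : cube n) : R :=
  \prod_(i < n) (if x i then p else 1 - p).

Definition flip {n : nat} (x : cube n) (i : 'I_n) : cube n :=
  [ffun j => if j == i then ~~ x j else x j].

Definition infl {R : pzRingType} (p : R) {n : nat} (f : cube n -> bool) (i : 'I_n) : R :=
  \sum_(x : cube n | f x != f (flip x i)) mu p x.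

Lemma blk_lt (m n : nat) (i : 'I_n) (k : 'I_m) : (i * m + k < m * n)%N.
Proof.
have Hi := ltn_ord i; have Hk := ltn_ord k.
apply: (@leq_trans (i * m + m)); first by rewrite ltn_add2l.
by rewrite -mulSnr mulnC leq_mul2l Hi orbT.
Qed.

(* block y^i (0-based i): y^i_{k+1} is coordinate i*m + k (0-based),
   i.e. coordinate (i-1)m + j in the paper's 1-based convention. *)
Definition block {m n : nat} (y : cube (m * n)) (i : 'I_n) : 'I_m -> bool :=
  fun k => y (Ordinal (blk_lt i k)).

(* Bin(y^i) = sum_{j=0}^{m-1} 2^j y^i_{m-j}; with 0-based k = m-1-j. *)
Definition Bin (m : nat) (b : 'I_m -> bool) : nat :=
  \sum_(k < m) 2 ^ (m - 1 - k) * b k.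

Definition hfun (m t : nat) (b : 'I_m -> bool) : bool := (2 ^ m - t <= Bin b)%N.

Definition Red (m t : nat) {n : nat} (f : cube n -> bool) : cube (m * n) -> bool :=
  fun y => f [ffun i => hfun t (block y i)].
Arguments Red m t {n} f y.

(* Main.v *)
Require Import Defs.
From HB Require Import structures.
From mathcomp Require Import all_boot all_order all_algebra.
From mathcomp Require Import reals exp.
From mathcomp Require Import zify ring lra.
Import Order.TTheory GRing.Theory Num.Theory.
Set Implicit Arguments. Unset Strict Implicit. Unset Printing Implicit Defensive.

Lemma sum_interval (N a b : nat) : \sum_(0 <= v < N) (a <= v < b) = minn N b - a.
Proof.
elim: N => [|N IH]; first by rewrite big_geq // min0n.
rewrite big_nat_recr //= IH.
case: (leqP a N) => h1; case: (ltnP N b) => h2 /=; lia.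
Qed.

Definition V (M : nat) (c : nat -> bool) := \sum_(0 <= j < M) 2 ^ j * c j.

Lemma V_lt M c : V M c < 2 ^ M.
Proof.
rewrite /V; elim: M => [|M IH]; first by rewrite big_geq.
rewrite big_nat_recr //= expnS.
case: (c M) => /=; lia.
Qed.

Lemma V_inj M c c' : V M c = V M c' -> forall j, j < M -> c j = c' j.
Proof.
elim: M => [|M IH] // E j hj.
move: E; rewrite /V !big_nat_recr //= => E.
have l1 := V_lt M c; have l2 := V_lt M c'; rewrite /V in l1 l2.
have hM : c M = c' M.
  by move: E; case: (c M); case: (c' M) => /=; lia.
move: E; rewrite hM => E.
have E' : V M c = V M c' by rewrite /V; lia.
move: hj; rewrite ltnS leq_eqVlt => /orP [/eqP ->|]; first by [].
exact: IH.
Qed.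

Lemma sum_pow4 M : 3 * \sum_(0 <= j < M) (2 ^ j * 2 ^ j) + 1 = 2 ^ M * 2 ^ M.
Proof.
elim: M => [|M IH]; first by rewrite big_geq.
rewrite big_nat_recr //= expnS mulnDr; nia.
Qed.

Lemma sum_min (t a M : nat) : 2 ^ a <= t -> t < 2 ^ a.+1 ->
  3 * \sum_(0 <= j < M) (minn (2 ^ j) t) ^ 2 <= 4 * t ^ 2 + 3 * (M - a.+1) * t ^ 2.
Proof.
move=> ha hb.
have direct : forall M, M <= a.+1 -> 3 * \sum_(0 <= j < M) (minn (2 ^ j) t) ^ 2 < 4 * t ^ 2.
  move=> M' hM.
  have le1 : \sum_(0 <= j < M') (minn (2 ^ j) t) ^ 2 <= \sum_(0 <= j < M') (2 ^ j * 2 ^ j).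
    apply: leq_sum => j _; rewrite expnS expn1; apply: leq_mul; exact: geq_minl.
  have := sum_pow4 M'.
  have : 2 ^ M' <= 2 ^ a.+1 by rewrite leq_pexp2l.
  rewrite expnS; nia.
elim: M => [|M IH]; first by rewrite big_geq.
case: (leqP M.+1 a.+1) => hM.
  have := direct _ hM; lia.
rewrite big_nat_recr //=.
have -> : minn (2 ^ M) t = t.
  apply/minn_idPr; apply: ltnW; apply: (leq_trans hb); rewrite leq_pexp2l //.
have -> : M.+1 - a.+1 = (M - a.+1).+1 by lia.
rewrite mulnS mulnDl; nia.
Qed.
Section BinS.
Variable m : nat.

Definition cb (b : 'I_m -> bool) (j : nat) : bool :=
  match (insub j : option 'I_m) with Some o => b (rev_ord o) | None => false end.

Lemma cbE b (o : 'I_m) : cb b o = b (rev_ord o).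
Proof. by rewrite /cb valK. Qed.

Lemma Bin_V (b : 'I_m -> bool) : Bin b = V m (cb b).
Proof.
rewrite /V big_mkord /Bin (reindex_inj rev_ord_inj) /=.
apply: eq_bigr => j _; rewrite cbE; congr (2 ^ _ * _).
have := ltn_ord j; rewrite /=; lia.
Qed.

Lemma Bin_lt (b : 'I_m -> bool) : Bin b < 2 ^ m.
Proof. rewrite Bin_V; exact: V_lt. Qed.

Lemma Bin_inj (b b' : 'I_m -> bool) : Bin b = Bin b' -> b =1 b'.
Proof.
rewrite !Bin_V => /V_inj H o.
have := H (rev_ord o) (ltn_ord _); by rewrite !cbE rev_ordK.
Qed.

Lemma flipK n (x : cube n) i : flip (flip x i) i = x.
Proof. by apply/ffunP => j; rewrite !ffunE; case: (j == i) => //; rewrite negbK. Qed.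

Lemma flip_bij n i : bijective (fun x : cube n => flip x i).
Proof. by exists (fun x => flip x i) => x; rewrite flipK. Qed.

Lemma Bin_flip (b : cube m) k :
  Bin (flip b k) + 2 ^ (m - 1 - k) * b k = Bin b + 2 ^ (m - 1 - k) * ~~ b k.
Proof.
rewrite /Bin (bigD1 k) //= [in RHS](bigD1 k) //= ffunE eqxx.
have -> : \sum_(i < m | i != k) 2 ^ (m - 1 - i) * flip b k i =
          \sum_(i < m | i != k) 2 ^ (m - 1 - i) * b i.
  by apply: eq_bigr => i hi; rewrite ffunE (negbTE hi).
set S := bigop _ _ _; lia.
Qed.

Definition Binord (b : cube m) : 'I_(2 ^ m) := Ordinal (Bin_lt b).

Lemma Binord_bij : bijective Binord.
Proof.
apply: inj_card_bij.
  move=> b b' /(congr1 val) /= /Bin_inj E; apply/ffunP => o; exact: E.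
by rewrite card_ffun card_bool !card_ord.
Qed.

Lemma sum_Bin (F : nat -> nat) : \sum_(b : cube m) F (Bin b) = \sum_(0 <= v < 2 ^ m) F v.
Proof.
rewrite big_mkord (reindex Binord) /=; last exact: onW_bij Binord_bij.
by [].
Qed.

Lemma card_h t : t <= 2 ^ m -> \sum_(b : cube m) hfun t b = t.
Proof.
move=> ht.
have -> : \sum_(b : cube m) hfun t b = \sum_(b : cube m) (2 ^ m - t <= Bin b < 2 ^ m).
  by apply: eq_bigr => b _; rewrite /hfun Bin_lt andbT.
rewrite (sum_Bin (fun v => (2 ^ m - t <= v < 2 ^ m))) sum_interval minnn; lia.
Qed.

Lemma sens_bound t (k : 'I_m) : t <= 2 ^ m ->
  \sum_(b : cube m) (hfun t b != hfun t (flip b k)) <= 2 * minn (2 ^ (m - 1 - k)) t.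
Proof.
move=> ht; set w := 2 ^ (m - 1 - k); set T := 2 ^ m - t.
have E1 : forall b : cube m, (hfun t b != hfun t (flip b k)) =
   ((~~ hfun t b && hfun t (flip b k)) + (hfun t b && ~~ hfun t (flip b k)))%N :> nat.
  by move=> b; case: (hfun t b); case: (hfun t (flip b k)).
rewrite (eq_bigr _ (fun b _ => E1 b)) big_split /= mul2n -addnn.
have sflip : forall F : cube m -> nat, \sum_(b : cube m) F (flip b k) = \sum_(b : cube m) F b.
  move=> F; rewrite [in RHS](reindex (fun b => flip b k)) //; exact: onW_bij (flip_bij k).
have ht' := card_h ht.
have hw : \sum_(b : cube m) (T - w <= Bin b < T) <= w.
  rewrite (sum_Bin (fun v => (T - w <= v < T))) sum_interval; lia.
apply: leq_add; rewrite leq_min; apply/andP; split.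
- apply: leq_trans hw; apply: leq_sum => b _.
  have := Bin_flip b k; rewrite -/w /hfun -/T.
  case: (leqP T (Bin b)) => h1; case: (leqP T (Bin (flip b k))) => h2 //=;
  case: (b k) => /= E; rewrite ?andbT lt0b; try (apply/andP; split); lia.
- apply: (@leq_trans (\sum_(b : cube m) hfun t (flip b k))); last by rewrite (sflip (fun b => hfun t b)) ht'.
  apply: leq_sum => b _.
  by case: (hfun t b); case: (hfun t (flip b k)).
- rewrite -(sflip (fun b => (T - w <= Bin b < T))) in hw.
  apply: leq_trans hw; apply: leq_sum => b _.
  have := Bin_flip b k; rewrite -/w /hfun -/T.
  case: (leqP T (Bin b)) => h1; case: (leqP T (Bin (flip b k))) => h2 //=;
  case: (b k) => /= E; rewrite ?andbT lt0b; try (apply/andP; split); lia.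
- apply: (@leq_trans (\sum_(b : cube m) hfun t b)); last by rewrite ht'.
  apply: leq_sum => b _.
  by case: (hfun t b); case: (hfun t (flip b k)).
Qed.
End BinS.
Section Blocks.
Variables m n : nat.

Definition pidx (p : 'I_n * 'I_m) : 'I_(m * n) := Ordinal (blk_lt p.1 p.2).

Lemma m_pos (c : 'I_(m * n)) : 0 < m.
Proof. case: (posnP m) => // m0; have := ltn_ord c; move: (nat_of_ord c) => x; by rewrite m0. Qed.

Lemma div_lt (c : 'I_(m * n)) : c %/ m < n.
Proof. rewrite ltn_divLR ?(m_pos c) //; have := ltn_ord c; move: (nat_of_ord c) => x; by rewrite mulnC. Qed.

Lemma mod_lt (c : 'I_(m * n)) : c %% m < m.
Proof. by rewrite ltn_pmod ?(m_pos c). Qed.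

Definition qidx (c : 'I_(m * n)) : 'I_n * 'I_m := (Ordinal (div_lt c), Ordinal (mod_lt c)).

Lemma pidxK : cancel pidx qidx.
Proof.
move=> [i k]; have hk := ltn_ord k.
have hm : 0 < m by move: hk; move: (nat_of_ord k) => x; case: (m) => //.
congr pair; apply: val_inj => /=.
  by rewrite divnMDl // divn_small // addn0.
by rewrite modnMDl modn_small.
Qed.

Lemma qidxK : cancel qidx pidx.
Proof. by move=> c; apply: val_inj => /=; rewrite -divn_eq. Qed.

Lemma pidx_bij : bijective pidx.
Proof. by exists qidx; [exact: pidxK | exact: qidxK]. Qed.

Definition ub (Y : {ffun 'I_n -> cube m}) : cube (m * n) :=
  [ffun c => Y (qidx c).1 (qidx c).2].
Definition yb (y : cube (m * n)) : {ffun 'I_n -> cube m} :=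
  [ffun i => [ffun k => y (pidx (i, k))]].

Lemma ub_bij : bijective ub.
Proof.
exists yb.
  move=> Y; apply/ffunP => i; apply/ffunP => k; by rewrite !ffunE pidxK.
move=> y; apply/ffunP => c; rewrite !ffunE.
by rewrite -[in RHS](qidxK c); case: (qidx c).
Qed.

Lemma ubE Y i k : ub Y (pidx (i, k)) = Y i k.
Proof. by rewrite ffunE pidxK. Qed.

Lemma mu_ub {R : comPzRingType} (q : R) Y : mu q (ub Y) = (\prod_(i < n) mu q (Y i))%R.
Proof.
rewrite /mu (reindex pidx) /=; last exact: onW_bij pidx_bij.
rewrite [RHS]pair_big /=.
apply: eq_bigr => [[i k] _] /=; by rewrite ubE.
Qed.
End Blocks.
Section Fact.
Local Open Scope ring_scope.
Variable R : realType.
Variables (m t n : nat) (f : cube n -> bool).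

Definition H (Y : {ffun 'I_n -> cube m}) : cube n := [ffun l => hfun t (Y l)].
Definition setb (Y : {ffun 'I_n -> cube m}) i (b : cube m) : {ffun 'I_n -> cube m} :=
  [ffun l => if l == i then b else Y l].

Lemma hfun_ext (b b' : 'I_m -> bool) : b =1 b' -> hfun t b = hfun t b'.
Proof. move=> E; rewrite /hfun /Bin; congr (_ <= _)%N; apply: eq_bigr => k _; by rewrite E. Qed.

Lemma Red_ub Y : Red m t f (ub Y) = f (H Y).
Proof.
rewrite /Red; congr f; apply/ffunP => l; rewrite !ffunE; apply: hfun_ext => k.
exact: ubE.
Qed.

Lemma flip_ub Y i k : flip (ub Y) (pidx (i, k)) = ub (setb Y i (flip (Y i) k)).
Proof.
apply/ffunP => c; rewrite !ffunE.
have E : (c == pidx (i, k)) = (qidx c == (i, k)).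
  by rewrite -[X in X == _](qidxK c) (inj_eq (can_inj (@pidxK m n))).
rewrite E; case: (qidx c) => l k' /=; rewrite xpair_eqE.
case: (eqVneq l i) => [->|hl] /=; rewrite ?ffunE //.
Qed.

Lemma H_setb Y i k : H (setb Y i (flip (Y i) k)) =
  if hfun t (Y i) != hfun t (flip (Y i) k) then flip (H Y) i else H Y.
Proof.
apply/ffunP => l; case: ifP => hs; rewrite ?ffunE; case: (eqVneq l i) => [->|hl] //=;
  rewrite ?ffunE ?eqxx //=; by move: hs; case: (hfun t (Y i)); case: (hfun t (flip (Y i) k)).
Qed.

Lemma g_sens Y i k :
  (Red m t f (ub Y) != Red m t f (flip (ub Y) (pidx (i, k)))) =
  (hfun t (Y i) != hfun t (flip (Y i) k)) && (f (H Y) != f (flip (H Y) i)).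
Proof.
rewrite flip_ub !Red_ub H_setb; case: ifP => hs //=.
by rewrite eqxx.
Qed.

Lemma push (phi : 'I_n -> cube m -> R) (F : cube n -> R) :
  \sum_(Y : {ffun 'I_n -> cube m}) (\prod_l phi l (Y l)) * F (H Y) =
  \sum_(z : cube n) F z * \prod_l (\sum_(b : cube m) phi l b * (hfun t b == z l)%:R).
Proof.
have E : forall Y, F (H Y) = \sum_z F z * \prod_l (hfun t (Y l) == z l)%:R.
  move=> Y; rewrite (bigD1 (H Y)) //=.
  rewrite [X in F (H Y) * X]big1 ?mulr1; last by move=> l _; rewrite ffunE eqxx.
  rewrite big1 ?addr0 // => z hz.
  have : ~~ [forall l, hfun t (Y l) == z l].
    apply: contra hz => /forallP h; apply/eqP/ffunP => l; rewrite ffunE; apply/eqP; rewrite eq_sym; exact: h.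
  case/forallPn => l hl.
  by rewrite (bigD1 l) //= (negbTE hl) mul0r mulr0.
under eq_bigr do rewrite E big_distrr.
rewrite exchange_big /=; apply: eq_bigr => z _.
rewrite bigA_distr_bigA big_distrr /=; apply: eq_bigr => Y _.
rewrite mulrCA; congr (_ * _); by rewrite -big_split.
Qed.

Lemma symm (S : cube n -> R) (i : 'I_n) (c c' : 'I_n -> bool -> R) :
  (forall z, S (flip z i) = S z) -> (forall l, l != i -> c l =1 c' l) ->
  c i true + c i false = c' i true + c' i false ->
  \sum_z S z * \prod_l c l (z l) = \sum_z S z * \prod_l c' l (z l).
Proof.
move=> hS hc hi.
have key : forall cc : 'I_n -> bool -> R, (\sum_z S z * \prod_l cc l (z l)) *+ 2 =
   \sum_z S z * (\prod_(l | l != i) cc l (z l)) * (cc i true + cc i false).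
  move=> cc; rewrite mulr2n.
  rewrite [X in _ + X](reindex (fun z => flip z i)) /=; last exact: onW_bij (flip_bij i).
  rewrite -big_split /=; apply: eq_bigr => z _.
  rewrite hS (bigD1 i) //= [X in _ + _ * X](bigD1 i) //= ffunE eqxx.
  have -> : \prod_(l | l != i) cc l (flip z i l) = \prod_(l | l != i) cc l (z l).
    by apply: eq_bigr => l hl; rewrite ffunE (negbTE hl).
  case: (z i) => /=; ring.
have k1 := key c; have k2 := key c'.
have e : forall z : cube n, \prod_(l | l != i) c l (z l) = \prod_(l | l != i) c' l (z l).
  by move=> z; apply: eq_bigr => l hl; rewrite hc.
rewrite (eq_bigr _ (fun z _ => congr1 (fun X => S z * X * (c i true + c i false)) (e z))) in k1.
rewrite hi -k2 in k1.
by move: k1; rewrite !mulr2n => k1; lra.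
Qed.
End Fact.
Section Fact2.
Local Open Scope ring_scope.
Variable R : realType.
Variables (m t n : nat) (f : cube n -> bool).
Hypothesis htm : (t <= 2 ^ m)%N.

Lemma mu_half (b : cube m) : mu (2^-1 : R) b = ((2 ^ m)%:R)^-1.
Proof.
rewrite /mu (eq_bigr (fun _ => (2^-1 : R))); last first.
  by move=> k _; case: (b k) => //; lra.
by rewrite prodr_const card_ord natrX exprVn.
Qed.

Definition pp : R := t%:R / (2 ^ m)%:R.

Lemma Npos : (0 : R) < (2 ^ m)%:R.
Proof. by rewrite ltr0n expn_gt0. Qed.

Lemma count_h (beta : bool) :
  \sum_(b : cube m) mu (2^-1 : R) b * (hfun t b == beta)%:R = if beta then pp else 1 - pp.
Proof.
under eq_bigr do rewrite mu_half.
rewrite -big_distrr /= /pp.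
have hN := Npos.
case: beta.
  under eq_bigr do rewrite eqb_id.
  by rewrite -natr_sum card_h // mulrC.
have nb : forall x : bool, ((x == false)%:R : R) = 1 - x%:R by case; rewrite /= ?subrr ?subr0.
under eq_bigr do rewrite nb.
rewrite sumrB -natr_sum card_h // sumr_const card_ffun card_bool card_ord.
move: hN; set N := (2 ^ m)%:R => hN; field; lra.
Qed.

Lemma prodif (i : 'I_n) (F : 'I_n -> R) : \prod_(l < n) (if l == i then F l else 1) = F i.
Proof.
rewrite (bigD1 i) //= eqxx big1 ?mulr1 // => l hl; by rewrite (negbTE hl).
Qed.

Definition J (k : 'I_m) : R :=
  \sum_(b : cube m) mu (2^-1 : R) b * (hfun t b != hfun t (flip b k))%:R.

Lemma infl_red (i : 'I_n) (k : 'I_m) :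
  infl (2^-1 : R) (Red m t f) (pidx (i, k)) = infl pp f i * J k.
Proof.
rewrite /infl big_mkcond /= (reindex (@ub m n)) /=; last exact: onW_bij (@ub_bij m n).
pose s (b : cube m) := (hfun t b != hfun t (flip b k)).
pose phi (l : 'I_n) (b : cube m) := mu (2^-1 : R) b * (if l == i then (s b)%:R else 1).
pose D (z : cube n) := (f z != f (flip z i)).
have step1 : forall Y : {ffun 'I_n -> cube m},
   (if Red m t f (ub Y) != Red m t f (flip (ub Y) (pidx (i, k))) then mu (2^-1 : R) (ub Y) else 0)
   = (\prod_l phi l (Y l)) * (D (H t Y))%:R.
  move=> Y; rewrite g_sens mu_ub /phi big_split /=.
  rewrite (prodif i (fun l => (s (Y l))%:R)).
  by rewrite /s /D; case: (_ != _); case: (_ != _); rewrite /= ?mulr1 ?mulr0.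
rewrite (eq_bigr _ (fun Y _ => step1 Y)) (push t phi (fun z => (D z)%:R)).
pose c (l : 'I_n) (beta : bool) := \sum_(b : cube m) phi l b * (hfun t b == beta)%:R.
pose c' (l : 'I_n) (beta : bool) := (if beta then pp else 1 - pp) * (if l == i then J k else 1).
have -> : \sum_(z : cube n) (D z)%:R * \prod_l c l (z l) = \sum_z (D z)%:R * \prod_l c' l (z l).
  apply: (symm (i:=i)).
  - by move=> z /=; rewrite /D flipK eq_sym.
  - move=> l hl beta; rewrite /c /c' /phi (negbTE hl) mulr1 -count_h.
    by apply: eq_bigr => b _; rewrite /= mulr1.
  - rewrite /c /c' /phi eqxx /= -big_split /=.
    have -> : pp * J k + (1 - pp) * J k = J k by ring.
    rewrite /J.
    apply: eq_bigr => b _; rewrite -mulrDr /s; case: (hfun t b) => /=; by rewrite ?addr0 ?add0r mulr1.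
rewrite /c' big_distrl /= [RHS]big_mkcond /=; apply: eq_bigr => z _.
rewrite big_split /= (prodif i (fun _ => J k)).
rewrite /D /mu; case: (_ != _); rewrite /= ?mul1r ?mul0r //.
Qed.
End Fact2.
Lemma sum_rev (m t : nat) :
  (\sum_(k < m) (minn (2 ^ (m - 1 - k)) t) ^ 2 = \sum_(0 <= j < m) (minn (2 ^ j) t) ^ 2)%N.
Proof.
rewrite big_mkord [LHS](reindex_inj rev_ord_inj) /=; apply: eq_bigr => k _.
have := ltn_ord k; move=> hk; congr (minn (2 ^ _) _ ^ 2); lia.
Qed.

Section Final.
Local Open Scope ring_scope.
Variable R : realType.
Variables (m t : nat).
Hypothesis htm : (t <= 2 ^ m)%N.

Lemma J_eq (k : 'I_m) : J R t k =
  ((2 ^ m)%:R)^-1 * (\sum_(b : cube m) (hfun t b != hfun t (flip b k)))%N%:R.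
Proof.
rewrite /J; under eq_bigr do rewrite mu_half.
by rewrite -big_distrr /= natr_sum.
Qed.

Lemma J_bound (k : 'I_m) : 0 <= J R t k <= ((2 ^ m)%:R)^-1 * (2 * minn (2 ^ (m - 1 - k)) t)%N%:R.
Proof.
rewrite J_eq; apply/andP; split.
  by apply: mulr_ge0; rewrite ?invr_ge0 ler0n.
apply: ler_wpM2l; first by rewrite invr_ge0 ler0n.
by rewrite ler_nat sens_bound.
Qed.

Lemma log_bound (z : nat) : (0 < t)%N -> (2 ^ z * t <= 2 ^ m)%N ->
  (z%:R : R) <= ln (1 / (t%:R / (2 ^ m)%:R)) / ln 2.
Proof.
move=> ht hz.
have ln2 : 0 < ln (2 : R) by apply: ln_gt0; rewrite ltr1n.
have tpos : (0 : R) < t%:R by rewrite ltr0n.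
have Npos : (0 : R) < (2 ^ m)%:R by rewrite ltr0n expn_gt0.
have e : ln ((2:R) ^+ z) = ln 2 *+ z by apply: lnXn.
rewrite ler_pdivlMr //.
have ee : (z%:R : R) * ln 2 = ln (2 ^+ z).
  by rewrite e mulrC mulr_natr.
rewrite ee.
rewrite ler_ln ?posrE ?exprn_gt0 //; last first.
  by rewrite div1r invr_gt0 divr_gt0.
rewrite div1r invf_div ler_pdivlMr // -natrX -natrM ler_nat.
exact: hz.
Qed.
End Final.
Unset Implicit Arguments.
Local Open Scope ring_scope.

Theorem proposition2p6 (R : realType) (m t n : nat) (f : cube n -> bool) :
  (1 <= m)%N -> (1 <= t)%N -> (t <= 2 ^ (m - 1))%N ->
  let p : R := t%:R / (2 ^ m)%:R in
  \sum_(i < m * n) (infl (2^-1 : R) (Red m t f) i) ^+ 2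
    <= 12 * p ^+ 2 * (Num.floor (ln (1 / p) / ln 2))%:~R
       * \sum_(i < n) (infl p f i) ^+ 2.
Proof.
move=> hm ht1 ht2; cbv zeta; set p : R := t%:R / (2 ^ m)%:R.
have htm : (t <= 2 ^ m)%N.
  by apply: leq_trans ht2 _; rewrite leq_pexp2l // leq_subr.
set L := Num.floor _.
have e1 : forall x : 'I_n * 'I_m, (infl (2^-1 : R) (Red m t f) (pidx x))^+2
     = (infl p f x.1)^+2 * (J R t x.2)^+2.
  by case=> i k; rewrite infl_red // exprMn.
rewrite (reindex (@pidx m n)) /=; last exact: onW_bij (@pidx_bij m n).
rewrite (eq_bigr _ (fun x _ => e1 x)).
have e2 : \sum_(x : 'I_n * 'I_m) (infl p f x.1)^+2 * (J R t x.2)^+2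
   = \sum_(i < n) \sum_(k < m) (infl p f i)^+2 * (J R t k)^+2.
  by rewrite [RHS]pair_big.
rewrite e2.
have e3 : \sum_(i < n) \sum_(k < m) infl p f i ^+ 2 * J R t k ^+ 2
   = (\sum_(k < m) J R t k ^+ 2) * \sum_(i < n) infl p f i ^+ 2.
  rewrite mulrC big_distrl /=; apply: eq_bigr => i _; by rewrite big_distrr.
rewrite e3.
apply: ler_wpM2r; first by apply: sumr_ge0 => i _; exact: sqr_ge0.
set N : R := (2 ^ m)%:R.
have Npos : 0 < N by rewrite ltr0n expn_gt0.
have hB : \sum_(k < m) (J R t k)^+2 <=
    \sum_(k < m) (N^-1 ^+ 2 * 4 * ((minn (2 ^ (m - 1 - k)) t) ^ 2)%N%:R).
  apply: ler_sum => k _.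
  have /andP [j0 j1] := J_bound R htm k.
  have -> : N^-1 ^+ 2 * 4 * ((minn (2 ^ (m - 1 - k)) t) ^ 2)%N%:R
      = (N^-1 * (2 * minn (2 ^ (m - 1 - k)) t)%N%:R) ^+ 2.
    by rewrite natrX natrM; ring.
  rewrite !expr2; apply: ler_pM => //.
rewrite -big_distrr /= -natr_sum sum_rev in hB.
set S := (\sum_(0 <= j < m) _)%N in hB.
set a := trunc_log 2 t.
have ha1 : (2 ^ a <= t)%N by apply: trunc_logP.
have ha2 : (t < 2 ^ a.+1)%N by apply: trunc_log_ltn.
have hS := sum_min m ha1 ha2; rewrite -/S in hS.
set Z := (m - a.+1)%N in hS.
have hS' : 3 * S%:R <= 4 * t%:R ^+ 2 + 3 * Z%:R * t%:R ^+ 2 :> R.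
  have := hS; rewrite -(ler_nat R) !natrD !natrM => h; rewrite !expr2; lra.
have am : (a.+1 <= m)%N.
  have h0 : (2 ^ a <= 2 ^ (m - 1))%N by exact: leq_trans ha1 ht2.
  have h : (a <= m - 1)%N by move: h0; rewrite leq_exp2l.
  lia.
have lb1 : (1%:R : R) <= ln (1 / p) / ln 2.
  apply: log_bound => //.
  rewrite -[X in (_ <= 2 ^ X)%N](subnK hm) expnD mulnC leq_mul2r ht2 orbT //.
have lbZ : (Z%:R : R) <= ln (1 / p) / ln 2.
  apply: log_bound => //.
  apply: (@leq_trans (2 ^ Z * 2 ^ a.+1)); first by rewrite leq_mul2l ltnW // orbT.
  by rewrite -expnD /Z subnK.
have L1 : (1 : R) <= L%:~R.
  have : (1%:Z <= L)%R by rewrite /L floor_ge_int.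
  by rewrite -(ler_int R).
have LZ : (Z%:R : R) <= L%:~R.
  have : (Z%:Z <= L)%R by rewrite /L floor_ge_int.
  by rewrite -(ler_int R).
apply: (le_trans hB).
set T := t%:R ^+ 2 : R.
set Lr : R := L%:~R.
set Zr : R := Z%:R.
have T0 : 0 <= T by rewrite /T sqr_ge0.
have h1 : 0 <= T * (Lr - Zr) by apply: mulr_ge0; rewrite // subr_ge0.
have h2 : 0 <= T * (Lr - 1) by apply: mulr_ge0; rewrite // subr_ge0.
have h3 : 0 <= T * Lr by apply: mulr_ge0; rewrite // (le_trans _ L1).
have key : 4 * S%:R <= 12 * T * Lr.
  rewrite -/T -/Zr in hS'; nra.
have u0 : 0 <= N^-1 ^+ 2 by rewrite sqr_ge0.
have -> : 12 * p ^+ 2 * Lr = N^-1 ^+ 2 * (12 * T * Lr).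
  by rewrite /p /T /N; field; lra.
rewrite -mulrA; apply: ler_wpM2l => //.
Qed.
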